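(* Let $\alpha,\beta$ be compositions with $\beta\subseteq\alpha$ such that the skew diagram $\alpha/\beta$ is connected. Then the poset $\mathrm{SET}(\alpha/\beta)$ has a unique minimal element, namely $S^{\mathrm{col}}_{\alpha/\beta}$. Equivalently, $\mathrm{SET}(\alpha/\beta)$ coincides with the interval $[S^{\mathrm{col}}_{\alpha/\beta},S^{\mathrm{row}}_{\alpha/\beta}]$ in the poset $\mathrm{SIT}(\alpha/\beta)$, and its rank is $\binom{|\alpha/\beta|}{2}-\sum_{c\in\alpha/\beta}\mathrm{ls}(c)$.
   Context: A composition $\alpha=(\alpha_1,\ldots,\alpha_k)$ is a finite sequence of positive integers, $|\alpha|=\sum\alpha_i$. Its diagram has rows numbered from the bottom (row 1 lowest), row $i$ consisting of the cells in columns $1,\ldots,\alpha_i$. For $\beta\subseteq\alpha$ (i.e. $\ell(\beta)\le\ell(\alpha)$, $\beta_j\le\alpha_j$), the skew diagram $\alpha/\beta$ consists of the cells in row $i$, column $j$ with $\beta_i<j\le\alpha_i$ ($\beta_i=0$ for $i>\ell(\beta)$); $n=|\alpha/\beta|=|\alpha|-|\beta|$. $\alpha/\beta$ is reduced if it has no empty rows; it is connected if, after deleting its empty rows, for every pair of consecutive rows there is a column containing a cell of each row of the pair. $\mathrm{SIT}(\alpha/\beta)$: bijective fillings of $\alpha/\beta$ with $1,\ldots,n$ with rows increasing left to right and column-1 entries increasing bottom to top. $\mathrm{SET}(\alpha/\beta)\subseteq\mathrm{SIT}(\alpha/\beta)$: fillings with all rows increasing left to right and all columns increasing bottom to top. For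 $1\le i\le n-1$, $\pi_i(T)=T$ if $i+1$ is in a strictly higher row than $i$, $\pi_i(T)=s_i(T)$ (swap $i$ and $i+1$) if $i+1$ is in a strictly lower row than $i$, and $\pi_i(T)=0$ otherwise. The poset order on $\mathrm{SIT}(\alpha/\beta)$: $T\le T'$ iff $T'$ is obtained from $T$ by a sequence of operators $\pi_i$ (all intermediate results nonzero); this poset is graded with rank function given by the number of inversions, and $\mathrm{SET}(\alpha/\beta)$ has the induced order. $S^{\mathrm{row}}_{\alpha/\beta}$ is the tableau filled with $1,\ldots,n$ consecutively along rows left to right, starting from the bottom row and moving up; $S^{\mathrm{col}}_{\alpha/\beta}$ is the tableau filled consecutively along columns bottom to top, starting from the leftmost column and moving right. For a cell $c$ of $\alpha/\beta$, $\mathrm{ls}(c)$ is the number of cells of $\alpha/\beta$ other than $c$ that are weakly southwest of $c$ (weakly below and weakly left). *)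

(* Defs.v *)
From mathcomp Require Import all_boot.
Set Implicit Arguments. Unset Strict Implicit. Unset Printing Implicit Defensive.

(* Conventions: a composition is a seq nat of positive parts; rows and
   columns are 0-indexed here (Rocq row i = paper row i+1, Rocq column j =
   paper column j+1).  A cell is a pair (row, column).  nth 0 b i = 0 for
   i >= size b, as in the paper (beta_i = 0 for i > l(beta)). *)

Definition cell := (nat * nat)%type.

Definition is_comp (a : seq nat) : bool := all (fun x => 0 < x) a.

Definition comp_sub (b a : seq nat) : bool :=
  (size b <= size a) && all (fun j => nth 0 b j <= nth 0 a j) (iota 0 (size b)).

(* the cells of alpha/beta, listed row by row from the bottom row, left to right *)
Definition cells (a b : seq nat) : seq cell :=
  flatten [seq [seq (i, j) | j <- iota (nth 0 b i) (nth 0 a i - nth 0 b i)]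
          | i <- iota 0 (size a)].

Definition nonempty_row (a b : seq nat) (i : nat) : bool :=
  (i < size a) && (nth 0 b i < nth 0 a i).

(* connected: consecutive nonempty rows (empty rows deleted) share a column *)
Definition skew_connected (a b : seq nat) : Prop :=
  forall i k, i < k -> nonempty_row a b i -> nonempty_row a b k ->
    (forall l, i < l < k -> ~~ nonempty_row a b l) ->
    maxn (nth 0 b i) (nth 0 b k) < minn (nth 0 a i) (nth 0 a k).

(* A filling T : seq nat lists the entries of the cells in the order of [cells a b]. *)
Definition entry (a b : seq nat) (T : seq nat) (c : cell) : nat :=
  nth 0 T (index c (cells a b)).

Definition is_SIT (a b : seq nat) (T : seq nat) : Prop :=
  [/\ perm_eq T (iota 1 (size (cells a b))),
      (forall c d, c \in cells a b -> d \in cells a b -> c.1 = d.1 -> c.2 < d.2 ->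
         entry a b T c < entry a b T d)
    & (forall c d, c \in cells a b -> d \in cells a b -> c.2 = 0 -> d.2 = 0 ->
         c.1 < d.1 -> entry a b T c < entry a b T d)].

Definition is_SET (a b : seq nat) (T : seq nat) : Prop :=
  [/\ perm_eq T (iota 1 (size (cells a b))),
      (forall c d, c \in cells a b -> d \in cells a b -> c.1 = d.1 -> c.2 < d.2 ->
         entry a b T c < entry a b T d)
    & (forall c d, c \in cells a b -> d \in cells a b -> c.2 = d.2 ->
         c.1 < d.1 -> entry a b T c < entry a b T d)].

Definition row_of (a b : seq nat) (T : seq nat) (v : nat) : nat :=
  (nth (0, 0) (cells a b) (index v T)).1.

Definition swap_vals (i : nat) (T : seq nat) : seq nat :=
  map (fun x => if x == i then i.+1 else if x == i.+1 then i else x) T.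

(* the 0-Hecke operator pi_i; None stands for 0 *)
Definition pi_op (a b : seq nat) (i : nat) (T : seq nat) : option (seq nat) :=
  if row_of a b T i < row_of a b T i.+1 then Some T
  else if row_of a b T i.+1 < row_of a b T i then Some (swap_vals i T)
  else None.

Inductive hecke_le (a b : seq nat) : seq nat -> seq nat -> Prop :=
  | hle_refl T : hecke_le a b T T
  | hle_step T T1 T2 i : 1 <= i -> i < size (cells a b) ->
      pi_op a b i T = Some T1 -> hecke_le a b T1 T2 -> hecke_le a b T T2.

Definition hecke_lt (a b : seq nat) (T T' : seq nat) : Prop :=
  hecke_le a b T T' /\ T <> T'.

Definition Srow (a b : seq nat) : seq nat := iota 1 (size (cells a b)).

Definition col_cells (a b : seq nat) : seq cell :=
  [seq c <- [seq (i, j) | j <- iota 0 (foldr maxn 0 a), i <- iota 0 (size a)]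
   | c \in cells a b].

Definition Scol (a b : seq nat) : seq nat :=
  [seq (index c (col_cells a b)).+1 | c <- cells a b].

Definition ls (a b : seq nat) (c : cell) : nat :=
  count (fun d => (d != c) && (d.1 <= c.1) && (d.2 <= c.2)) (cells a b).

Definition is_minimal (P : seq nat -> Prop) (le : seq nat -> seq nat -> Prop)
  (T : seq nat) : Prop :=
  P T /\ forall T', P T' -> le T' T -> T' = T.

Definition SET_chain (a b : seq nat) (s : seq (seq nat)) : Prop :=
  (forall k, k < size s -> is_SET a b (nth [::] s k)) /\
  (forall k, k.+1 < size s -> hecke_lt a b (nth [::] s k) (nth [::] s k.+1)).

Definition SET_rank (a b : seq nat) (r : nat) : Prop :=
  (exists s, SET_chain a b s /\ size s = r.+1) /\
  (forall s, SET_chain a b s -> size s <= r.+1).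

(* Main.v *)
Require Import Defs.
From mathcomp Require Import all_boot.
From mathcomp Require Import zify.
Set Implicit Arguments. Unset Strict Implicit. Unset Printing Implicit Defensive.

Lemma mem_cells a b i j :
  ((i, j) \in cells a b) = (i < size a) && (nth 0 b i <= j < nth 0 a i).
Proof.
apply/allpairsPdep/idP.
- case=> x [y [Hx Hy [-> ->]]]; move: Hx Hy; rewrite !mem_iota /=; lia.
- move=> /andP[H1 H2]; exists i, j; split => //; rewrite mem_iota; lia.
Qed.

Lemma mem_cellsE a b c :
  (c \in cells a b) = (c.1 < size a) && (nth 0 b c.1 <= c.2 < nth 0 a c.1).
Proof. by case: c => i j; rewrite mem_cells. Qed.

Lemma uniq_cells a b : uniq (cells a b).
Proof.
apply: allpairs_uniq_dep; first exact: iota_uniq.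
  by move=> x _; exact: iota_uniq.
by move=> [x y] [x' y'] _ _ /= [] -> ->.
Qed.

Definition lexrc (c d : cell) := (c.1 < d.1) || ((c.1 == d.1) && (c.2 < d.2)).
Definition lexcr (c d : cell) := (c.2 < d.2) || ((c.2 == d.2) && (c.1 < d.1)).

Lemma pairwise_allpairs (s : seq nat) (t : nat -> seq nat) :
  pairwise ltn s -> (forall i, pairwise ltn (t i)) ->
  pairwise lexrc [seq (i, j) | i <- s, j <- t i].
Proof.
elim: s => [|x s IH] //= /andP[Hx Hs] Ht.
rewrite pairwise_cat IH // andbT pairwise_map.
apply/andP; split.
  apply/allrelP => c d /mapP[j _ ->] /allpairsPdep[i [j' [Hi _ ->]]].
  by move: (allP Hx _ Hi); rewrite /lexrc /= => ->.
by apply: sub_pairwise (Ht x) => u v /= H; rewrite /lexrc /= eqxx H orbT.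
Qed.

Lemma pairwise_allpairs2 (s : seq nat) (t : seq nat) :
  pairwise ltn s -> pairwise ltn t ->
  pairwise lexcr [seq (i, j) | j <- s, i <- t].
Proof.
elim: s => [|x s IH] //= /andP[Hx Hs] Ht.
rewrite pairwise_cat IH // andbT pairwise_map.
apply/andP; split.
  apply/allrelP => c d /mapP[j _ ->] /allpairsPdep[i [j' [Hi _ ->]]].
  by move: (allP Hx _ Hi); rewrite /lexcr /= => ->.
by apply: sub_pairwise Ht => u v /= H; rewrite /lexcr /= eqxx H orbT.
Qed.

Lemma pairwise_iota m n : pairwise ltn (iota m n).
Proof. by rewrite -sorted_pairwise ?iota_ltn_sorted //; exact: ltn_trans. Qed.

Lemma pairwise_cells a b : pairwise lexrc (cells a b).
Proof. apply: pairwise_allpairs => *; exact: pairwise_iota. Qed.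

Lemma pairwise_col_cells a b : pairwise lexcr (col_cells a b).
Proof. apply: pairwise_filter; apply: pairwise_allpairs2; exact: pairwise_iota. Qed.

Lemma nth_le_foldr (a : seq nat) i : i < size a -> nth 0 a i <= foldr maxn 0 a.
Proof.
elim: a i => [|x a IH] [|i] //= H; first by rewrite leq_maxl.
by apply: leq_trans (IH _ H) (leq_maxr _ _).
Qed.

Lemma mem_col_cells a b c : (c \in col_cells a b) = (c \in cells a b).
Proof.
rewrite mem_filter andb_idr // mem_cellsE => /andP[H1 /andP[H2 H3]].
apply/allpairsPdep; exists c.2, c.1; rewrite !mem_iota /=; split => //; last by case: c {H2 H3 H1}.
by rewrite add0n; apply: leq_trans H3 (nth_le_foldr H1).
Qed.

Lemma uniq_col_cells a b : uniq (col_cells a b).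
Proof.
apply: filter_uniq; apply: allpairs_uniq_dep; first exact: iota_uniq.
  by move=> x _; exact: iota_uniq.
by move=> [x y] [x' y'] _ _ /= [] -> ->.
Qed.


Definition nc a b := size (cells a b).
Definition cp a b p := nth (0,0) (cells a b) p.
Definition isperm a b T := perm_eq T (iota 1 (nc a b)).

Lemma cp_in a b p : p < nc a b -> cp a b p \in cells a b.
Proof. by move=> H; apply: mem_nth. Qed.

Lemma index_cp a b p : p < nc a b -> index (cp a b p) (cells a b) = p.
Proof. by move=> H; apply: index_uniq => //; exact: uniq_cells. Qed.

Lemma entry_cp a b T p : p < nc a b -> entry a b T (cp a b p) = nth 0 T p.
Proof. by move=> H; rewrite /entry index_cp. Qed.

Lemma cp_index a b c : c \in cells a b -> cp a b (index c (cells a b)) = c.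
Proof. by move=> H; rewrite /cp nth_index. Qed.

Lemma index_cells_lt a b c : c \in cells a b -> index c (cells a b) < nc a b.
Proof. by rewrite /nc index_mem. Qed.

Lemma cp_inj a b p q : p < nc a b -> q < nc a b -> cp a b p = cp a b q -> p = q.
Proof. by move=> Hp Hq /eqP; rewrite /cp nth_uniq ?uniq_cells // => /eqP. Qed.

Lemma perm_sizeT a b T : isperm a b T -> size T = nc a b.
Proof. by move/perm_size; rewrite size_iota. Qed.

Lemma perm_memT a b T v : isperm a b T -> (v \in T) = (0 < v <= nc a b).
Proof. by move/perm_mem => ->; rewrite mem_iota; lia. Qed.

Lemma perm_uniqT a b T : isperm a b T -> uniq T.
Proof. by move/perm_uniq => ->; exact: iota_uniq. Qed.

Lemma nthT_range a b T p : isperm a b T -> p < nc a b -> 0 < nth 0 T p <= nc a b.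
Proof. by move=> H Hp; rewrite -(perm_memT _ H) mem_nth // (perm_sizeT H). Qed.

Lemma nthT_inj a b T p q : isperm a b T -> p < nc a b -> q < nc a b ->
  nth 0 T p = nth 0 T q -> p = q.
Proof.
move=> H Hp Hq /eqP; rewrite nth_uniq ?(perm_sizeT H) //; first by move/eqP.
exact: perm_uniqT H.
Qed.

Lemma indexT_lt a b T v : isperm a b T -> 0 < v <= nc a b -> index v T < nc a b.
Proof. by move=> H Hv; rewrite -(perm_sizeT H) index_mem (perm_memT _ H). Qed.

Lemma nth_indexT a b T v : isperm a b T -> 0 < v <= nc a b -> nth 0 T (index v T) = v.
Proof. by move=> H Hv; rewrite nth_index // (perm_memT _ H). Qed.

Lemma index_nthT a b T p : isperm a b T -> p < nc a b -> index (nth 0 T p) T = p.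
Proof. by move=> H Hp; rewrite index_uniq ?(perm_sizeT H) //; exact: perm_uniqT H. Qed.

Definition fsw (i x : nat) := if x == i then i.+1 else if x == i.+1 then i else x.

Lemma fswK i : involutive (fsw i).
Proof. by move=> x; rewrite /fsw; repeat (case: eqP => //=); lia. Qed.

Lemma fsw_inj i : injective (fsw i).
Proof. exact: inv_inj (fswK i). Qed.

Lemma fsw_lt i x y : ~~ ((x == i) && (y == i.+1)) -> ~~ ((x == i.+1) && (y == i)) ->
  (fsw i x < fsw i y) = (x < y).
Proof. by rewrite /fsw; repeat (case: eqP => //=); lia. Qed.

Lemma swap_vals_E i T : swap_vals i T = map (fsw i) T.
Proof. by []. Qed.

Lemma nth_swap i T p : p < size T -> nth 0 (swap_vals i T) p = fsw i (nth 0 T p).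
Proof. by move=> H; rewrite (nth_map 0). Qed.

Lemma index_swap i T v : index v (swap_vals i T) = index (fsw i v) T.
Proof. by rewrite -{1}(fswK i v) index_map //; exact: fsw_inj. Qed.

Lemma row_of_swap a b i T v : row_of a b (swap_vals i T) v = row_of a b T (fsw i v).
Proof. by rewrite /row_of index_swap. Qed.

Lemma swapK i T : swap_vals i (swap_vals i T) = T.
Proof. by rewrite /swap_vals -map_comp (eq_map (fswK i)) map_id. Qed.

Lemma size_swap i T : size (swap_vals i T) = size T.
Proof. by rewrite size_map. Qed.

Lemma perm_swap a b T i : isperm a b T -> 0 < i -> i < nc a b -> isperm a b (swap_vals i T).
Proof.
move=> H Hi1 Hi2; apply: uniq_perm; last first.
- move=> v; rewrite mem_iota -{1}(fswK i v) mem_map; last exact: fsw_inj.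
  rewrite (perm_memT _ H) /fsw; repeat (case: eqP => //=); lia.
- exact: iota_uniq.
- by rewrite map_inj_uniq ?(perm_uniqT H) //; exact: fsw_inj.
Qed.

Definition Dinv a b T := \sum_(p < nc a b) \sum_(q < nc a b)
   (((cp a b p).1 < (cp a b q).1) && (nth 0 T q < nth 0 T p)).

Lemma D_swap a b T i : isperm a b T -> 0 < i -> i < nc a b ->
  row_of a b T i.+1 < row_of a b T i -> Dinv a b (swap_vals i T) + 1 = Dinv a b T.
Proof.
move=> H Hi1 Hi2 Hrow.
have Hs := perm_sizeT H.
have Hv1 : 0 < i <= nc a b by lia.
have Hv2 : 0 < i.+1 <= nc a b by lia.
pose px := Ordinal (indexT_lt H Hv1).
pose py := Ordinal (indexT_lt H Hv2).
have Hpx : nth 0 T px = i by rewrite (nth_indexT H).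
have Hpy : nth 0 T py = i.+1 by rewrite (nth_indexT H).
have posx : forall q : 'I_(nc a b), nth 0 T q = i -> q = px.
  by move=> q Hq; apply: val_inj => /=; rewrite -Hq (index_nthT H).
have posy : forall q : 'I_(nc a b), nth 0 T q = i.+1 -> q = py.
  by move=> q Hq; apply: val_inj => /=; rewrite -Hq (index_nthT H).
have key : forall p q : 'I_(nc a b),
   (((cp a b p).1 < (cp a b q).1) && (nth 0 T q < nth 0 T p) : nat) =
   (((cp a b p).1 < (cp a b q).1) && (nth 0 (swap_vals i T) q < nth 0 (swap_vals i T) p))
   + ((p == py) && (q == px)).
  move=> p q; rewrite !nth_swap ?Hs //.
  case: (eqVneq p py) => [->|Hp] /=; case: (eqVneq q px) => [->|Hq] /=.
  - rewrite Hpx Hpy /fsw eqxx (_ : i.+1 == i = false) ?eqxx; last by lia.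
    move: Hrow; rewrite /row_of => ->; rewrite ltnSn; case: ltnP => //; lia.
  - rewrite fsw_lt ?addn0 //.
      by apply/negP => /andP[/eqP /posx H1 _]; rewrite H1 eqxx in Hq.
    by rewrite (nth_indexT H Hv2) (_ : i.+1 == i = false) ?andbF //; lia.
  - rewrite fsw_lt ?addn0 //.
      by apply/negP => /andP[_ /eqP /posy H1]; rewrite H1 eqxx in Hp.
    by rewrite (nth_indexT H Hv1) (_ : i == i.+1 = false) //; lia.
  - case: (eqVneq p px) => [Ep|Hp']; first case: (eqVneq q py) => [Eq|Hq'].
    + have -> : (cp a b p).1 < (cp a b q).1 = false.
        by move: Hrow; rewrite /row_of Ep Eq /=; case: ltngtP.
      by [].
    + rewrite fsw_lt ?addn0 //.
        by apply/negP => /andP[/eqP /posx H1 _]; rewrite H1 eqxx in Hq.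
      by apply/negP => /andP[/eqP /posy H1 _]; rewrite H1 eqxx in Hq'.
    + rewrite fsw_lt ?addn0 //.
        by apply/negP => /andP[/eqP /posx H1 _]; rewrite H1 eqxx in Hq.
      by apply/negP => /andP[_ /eqP /posx H1]; rewrite H1 eqxx in Hp'.
have -> : Dinv a b T = \sum_(p < nc a b) \sum_(q < nc a b)
   ((((cp a b p).1 < (cp a b q).1) && (nth 0 (swap_vals i T) q < nth 0 (swap_vals i T) p) : nat)
   + ((p == py) && (q == px))).
  by apply: eq_bigr => p _; apply: eq_bigr => q _; exact: key.
under eq_bigr => p _ do rewrite big_split /=.
rewrite big_split /=; congr (_ + _).
rewrite (bigD1 py) //= [X in _ + X]big1; last first.
  by move=> p /negbTE Hp; apply: big1 => q _; rewrite Hp.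
rewrite eqxx addn0 (bigD1 px) //= [X in _ + X]big1 ?eqxx // => q /negbTE Hq.
by rewrite Hq.
Qed.


Lemma entry_in a b T c : isperm a b T -> c \in cells a b ->
  0 < entry a b T c <= nc a b.
Proof. by move=> H Hc; apply: nthT_range H (index_cells_lt Hc). Qed.

Lemma cell_of_val a b T c : isperm a b T -> c \in cells a b ->
  cp a b (index (entry a b T c) T) = c.
Proof. by move=> H Hc; rewrite /entry (index_nthT H) ?index_cells_lt ?cp_index. Qed.

Lemma entry_swap a b T i c : isperm a b T -> c \in cells a b ->
  entry a b (swap_vals i T) c = fsw i (entry a b T c).
Proof. by move=> H Hc; rewrite /entry nth_swap // (perm_sizeT H) index_cells_lt. Qed.

Lemma entry_inj a b T c d : isperm a b T -> c \in cells a b -> d \in cells a b ->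
  entry a b T c = entry a b T d -> c = d.
Proof.
move=> H Hc Hd E; rewrite -(cell_of_val H Hc) -(cell_of_val H Hd); by rewrite E.
Qed.

Definition cellv a b (T : seq nat) (v : nat) := cp a b (index v T).

Lemma cellv_in a b T v : isperm a b T -> 0 < v <= nc a b -> cellv a b T v \in cells a b.
Proof. by move=> H Hv; apply: cp_in; apply: indexT_lt H Hv. Qed.

Lemma entry_cellv a b T v : isperm a b T -> 0 < v <= nc a b -> entry a b T (cellv a b T v) = v.
Proof. by move=> H Hv; rewrite /cellv entry_cp ?(nth_indexT H) //; apply: indexT_lt H Hv. Qed.

Lemma swap_pres a b T i (R : cell -> cell -> Prop) :
  isperm a b T ->
  (forall c d, c \in cells a b -> d \in cells a b -> R c d -> entry a b T c < entry a b T d) ->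
  ~ R (cellv a b T i) (cellv a b T i.+1) -> ~ R (cellv a b T i.+1) (cellv a b T i) ->
  (forall c d, c \in cells a b -> d \in cells a b -> R c d ->
     entry a b (swap_vals i T) c < entry a b (swap_vals i T) d).
Proof.
move=> H HR N1 N2 c d Hc Hd Rcd.
rewrite !(entry_swap _ H) // fsw_lt ?HR //.
  apply/negP => /andP[/eqP E1 /eqP E2]; apply: N1.
  by rewrite /cellv -E2 -E1 !(cell_of_val H).
apply/negP => /andP[/eqP E1 /eqP E2]; apply: N2.
by rewrite /cellv -E1 -E2 !(cell_of_val H).
Qed.

Lemma row_of_cellv a b T v : row_of a b T v = (cellv a b T v).1.
Proof. by []. Qed.

Lemma pi_cases a b T i T1 : pi_op a b i T = Some T1 ->
  T1 = T \/ (T1 = swap_vals i T /\ row_of a b T i.+1 < row_of a b T i).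
Proof.
rewrite /pi_op; case: ifP => _; first by case=> ->; left.
by case: ifP => // H [<-]; right.
Qed.

Lemma pi_perm a b T i T1 : isperm a b T -> 0 < i -> i < nc a b ->
  pi_op a b i T = Some T1 -> isperm a b T1.
Proof. by move=> H H1 H2 /pi_cases [->|[-> _]] //; apply: perm_swap. Qed.

Lemma pi_SET a b T i T1 : is_SET a b T -> 0 < i -> i < nc a b ->
  pi_op a b i T = Some T1 -> is_SET a b T1.
Proof.
move=> [H Hr Hc] H1 H2 /pi_cases [->|[-> Hrow]]; first by split.
have Hv1 : 0 < i <= nc a b by lia.
have Hv2 : 0 < i.+1 <= nc a b by lia.
have Ex := entry_cellv H Hv1; have Ey := entry_cellv H Hv2.
have Cx := cellv_in H Hv1; have Cy := cellv_in H Hv2.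
move: Hrow; rewrite !row_of_cellv => Hrow.
split.
- exact: perm_swap.
- move=> c0 d0 Hc0 Hd0 E1 E2.
  apply: (swap_pres (R := fun c d => c.1 = d.1 /\ c.2 < d.2) H _ _ _ Hc0 Hd0) => //.
  + by move=> c d Hc' Hd' [F1 F2]; apply: Hr.
  + by move=> [E _]; move: Hrow; rewrite E ltnn.
  + by move=> [E _]; move: Hrow; rewrite E ltnn.
- move=> c0 d0 Hc0 Hd0 E1 E2.
  apply: (swap_pres (R := fun c d => c.2 = d.2 /\ c.1 < d.1) H _ _ _ Hc0 Hd0) => //.
  + by move=> c d Hc' Hd' [F1 F2]; apply: Hc.
  + by move=> [_ E]; move: E Hrow; case: ltngtP.
  + move=> [F1 F2]; have := Hc _ _ Cy Cx F1 F2; rewrite Ex Ey; lia.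
Qed.

Lemma hecke_le_SET a b T T' : hecke_le a b T T' -> is_SET a b T -> is_SET a b T'.
Proof.
elim=> [//|{}T T1 T2 i H1 H2 Hpi _ IH] HT; apply: IH; exact: pi_SET HT H1 H2 Hpi.
Qed.

Lemma hecke_le_trans a b T1 T2 T3 : hecke_le a b T1 T2 -> hecke_le a b T2 T3 -> hecke_le a b T1 T3.
Proof.
elim=> [//|T T' T'' i H1 H2 Hpi _ IH] H; apply: hle_step H1 H2 Hpi (IH H).
Qed.

Lemma hle_D a b T T' : hecke_le a b T T' -> isperm a b T ->
  [/\ isperm a b T', Dinv a b T' <= Dinv a b T & (Dinv a b T' = Dinv a b T -> T' = T)].
Proof.
elim=> [T0|T0 T1 T2 i H1 H2 Hpi _ IH] HT; first by split.
have HT1 := pi_perm HT H1 H2 Hpi.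
case: (IH HT1) => HT2 Hle Heq.
case: (pi_cases Hpi) => [E|[E Hrow]]; first by subst T1.
have HD := D_swap HT H1 H2 Hrow; rewrite -E in HD.
split => //; first lia.
lia.
Qed.


Lemma count_lt_iota v n : 0 < v <= n.+1 -> count (fun x => x < v) (iota 1 n) = v.-1.
Proof.
move=> Hv.
have -> : n = v.-1 + (n - v.-1) by lia.
rewrite iotaD count_cat.
rewrite (@eq_in_count _ _ predT); last by move=> x; rewrite mem_iota /=; lia.
rewrite count_predT size_iota (@eq_in_count _ _ pred0) ?count_pred0 ?addn0 //.
by move=> x; rewrite mem_iota /=; lia.
Qed.

Lemma nth_count a b T p : isperm a b T -> p < nc a b ->
  nth 0 T p = (count (fun q => nth 0 T q < nth 0 T p) (iota 0 (nc a b))).+1.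
Proof.
move=> H Hp.
have := nthT_range H Hp => Hr.
rewrite -(count_map (nth 0 T) (fun x => x < nth 0 T p)).
have -> : [seq nth 0 T i | i <- iota 0 (nc a b)] = T.
  by rewrite -(perm_sizeT H) -/(mkseq _ _) mkseq_nth.
have HP := elimT permP H.
rewrite HP count_lt_iota; lia.
Qed.

Lemma rel_eq a b T T' : isperm a b T -> isperm a b T' ->
  (forall p q, p < nc a b -> q < nc a b -> nth 0 T p < nth 0 T q -> nth 0 T' p < nth 0 T' q) ->
  T = T'.
Proof.
move=> H H' Hrel.
have conv : forall p q, p < nc a b -> q < nc a b -> nth 0 T' p < nth 0 T' q -> nth 0 T p < nth 0 T q.
  move=> p q Hp Hq Hlt; case: (ltngtP (nth 0 T p) (nth 0 T q)) => // Hc.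
    by have := Hrel _ _ Hq Hp Hc; lia.
  by move/(nthT_inj H Hp Hq): Hc => E; subst; lia.
apply: (@eq_from_nth _ 0); first by rewrite (perm_sizeT H) (perm_sizeT H').
move=> p; rewrite (perm_sizeT H) => Hp.
rewrite (nth_count H Hp) (nth_count H' Hp); congr (_.+1).
apply: eq_in_count => q; rewrite mem_iota => /andP[_ Hq] /=.
apply/idP/idP; [exact: Hrel | exact: conv].
Qed.

Lemma lexcr_asym c d : lexcr c d -> lexcr d c -> False.
Proof. by case: c d => [c1 c2] [d1 d2]; rewrite /lexcr /=; case: ltngtP => //= _; case: ltngtP. Qed.

Lemma lexcr_irr c : lexcr c c = false.
Proof. by rewrite /lexcr !ltnn andbF. Qed.

Lemma lexcr_total c d : c != d -> lexcr c d || lexcr d c.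
Proof.
case: c d => [c1 c2] [d1 d2]; rewrite /lexcr /= xpair_eqE.
by case: (ltngtP c2 d2) => //= _; case: (ltngtP c1 d1); rewrite ?eqxx ?andbT //=.
Qed.

Lemma size_col_cells a b : size (col_cells a b) = nc a b.
Proof.
apply: perm_size; apply: uniq_perm; [exact: uniq_col_cells|exact: uniq_cells|].
by move=> c; rewrite mem_col_cells.
Qed.

Lemma entry_Scol a b c : c \in cells a b -> entry a b (Scol a b) c = (index c (col_cells a b)).+1.
Proof. by move=> Hc; rewrite /entry /Scol (nth_map (0,0)) ?index_mem // nth_index. Qed.

Lemma index_cc_lt a b c d : c \in cells a b -> d \in cells a b ->
  (index c (col_cells a b) < index d (col_cells a b)) = lexcr c d.
Proof.
move=> Hc Hd.
have Hc' : c \in col_cells a b by rewrite mem_col_cells.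
have Hd' : d \in col_cells a b by rewrite mem_col_cells.
have P := pairwiseP (0,0) (pairwise_col_cells a b).
have ic : index c (col_cells a b) < size (col_cells a b) by rewrite index_mem.
have id : index d (col_cells a b) < size (col_cells a b) by rewrite index_mem.
apply/idP/idP => [Hlt|Hl].
  by have := P _ _ ic id Hlt; rewrite !nth_index.
case: (ltngtP (index c (col_cells a b)) (index d (col_cells a b))) => // Hc2.
  by have := P _ _ id ic Hc2; rewrite !nth_index // => /(lexcr_asym Hl).
have E : c = d by rewrite -(nth_index (0,0) Hc') Hc2 nth_index.
by rewrite E lexcr_irr in Hl.
Qed.

Lemma Scol_perm a b : isperm a b (Scol a b).
Proof.
rewrite /isperm /Scol.
have P : perm_eq (cells a b) (col_cells a b).
  apply: uniq_perm; [exact: uniq_cells|exact: uniq_col_cells|].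
  by move=> c; rewrite mem_col_cells.
apply: perm_trans (perm_map _ P) _; rewrite -size_col_cells.
suff -> : [seq (index c (col_cells a b)).+1 | c <- col_cells a b] = iota 1 (size (col_cells a b)) by [].
apply: (@eq_from_nth _ 0); first by rewrite size_map size_iota.
move=> k; rewrite size_map => Hk.
rewrite (nth_map (0,0)) // nth_iota // index_uniq // //.
exact: uniq_col_cells.
Qed.

Lemma Scol_lt a b c d : c \in cells a b -> d \in cells a b ->
  (entry a b (Scol a b) c < entry a b (Scol a b) d) = lexcr c d.
Proof. by move=> Hc Hd; rewrite !entry_Scol // ltnS index_cc_lt. Qed.

Lemma Scol_SET a b : is_SET a b (Scol a b).
Proof.
split; first exact: Scol_perm.
- by move=> c d Hc Hd E1 E2; rewrite Scol_lt // /lexcr E2.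
- by move=> c d Hc Hd E1 E2; rewrite Scol_lt // /lexcr E1 eqxx E2 orbT.
Qed.

Lemma Srow_perm a b : isperm a b (Srow a b).
Proof. exact: perm_refl. Qed.

Lemma nth_Srow a b p : p < nc a b -> nth 0 (Srow a b) p = p.+1.
Proof. by move=> Hp; rewrite /Srow nth_iota. Qed.


Lemma sw_aux a b T k : skew_connected a b -> is_SET a b T ->
  forall r' j' r j : nat, r - r' < k -> (r', j') \in cells a b -> (r, j) \in cells a b ->
  r' <= r -> j' <= j -> (r', j') <> (r, j) ->
  entry a b T (r', j') < entry a b T (r, j).
Proof.
move=> Hcon [HP Hr Hc].
elim: k => [|k IH] r' j' r j Hk Hy Hx Hrr Hjj Hne; first lia.
have Hy' := Hy; have Hx' := Hx.
rewrite mem_cells in Hy'; rewrite mem_cells in Hx'.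
move: Hy' Hx' => /andP[Hy1 /andP[Hy2 Hy3]] /andP[Hx1 /andP[Hx2 Hx3]].
case: (eqVneq r' r) => [Er|Nr].
  subst r'; apply: Hr => //=; case: (ltngtP j' j) => // E; [lia|by subst].
have Hrr' : r' < r by lia.
case Hrj: ((r', j) \in cells a b).
  case: (eqVneq j' j) => [Ej|Nj].
    by subst j'; apply: Hc.
  apply: (@ltn_trans (entry a b T (r', j))); first by apply: Hr => //=; lia.
  by apply: Hc.
have Haj : nth 0 a r' <= j.
  by move: Hrj; rewrite mem_cells Hy1 /=; lia.
suff [s [c [Hz Hs12 Hc12 HE]]] : exists s c, [/\ (s, c) \in cells a b,
    r' < s <= r, j' <= c <= j & entry a b T (r', j') < entry a b T (s, c)].
  case: (eqVneq (s, c) (r, j)) => [Ez|Nz].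
    by rewrite -Ez.
  apply: ltn_trans HE _; apply: IH => //; try lia.
  by move/eqP: Nz.
pose Q := fun s => [&& r' < s, s <= r, nonempty_row a b s & j' < nth 0 a s].
have exQ : exists s, Q s.
  by exists r; rewrite /Q /nonempty_row Hrr' leqnn Hx1 /=; lia.
case: (ex_minnP exQ) => s /and4P[Qs1 Qs2 Qs3 Qs4] Qmin.
have Hns := Qs3.
move: Qs3; rewrite /nonempty_row => /andP[Hs Hbs].
have Hyz : ((s, j') \in cells a b) -> nth 0 b s <= j' ->
    exists s0 c, [/\ (s0, c) \in cells a b, r' < s0 <= r, j' <= c <= j &
                    entry a b T (r', j') < entry a b T (s0, c)].
  move=> Hin Hb; exists s, j'; split => //; first lia.
  by rewrite leqnn Hjj.
  by apply: Hc.
case: (leqP (nth 0 b s) j') => Hbj.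
  apply: Hyz (Hbj); rewrite mem_cells Hs /=; lia.
(* b_s > j' : the previous nonempty row is r' *)
pose Q' := fun t => [&& r' <= t, t < s & nonempty_row a b t].
have exQ' : exists t, Q' t.
  by exists r'; rewrite /Q' leqnn Qs1 /nonempty_row Hy1 /=; lia.
have ubQ' : forall t, Q' t -> t <= s by move=> t /and3P[_ ? _]; lia.
case: (ex_maxnP exQ' ubQ') => s' /and3P[Q1 Q2 Q3] Qmax.
have Hcs := Hcon s' s Q2 Q3 Hns.
have Hcs' : forall l, s' < l < s -> ~~ nonempty_row a b l.
  move=> l Hl; apply/negP => Hne'.
  have := Qmax l; rewrite /Q' Hne' andbT; lia.
have {Hcs Hcs'} := Hcs Hcs'.
case: (eqVneq s' r') => [Es'|Ns'].
  subst s'.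
  move=> M.
  have Hin1 : (r', nth 0 b s) \in cells a b by rewrite mem_cells Hy1 /=; lia.
  have Hin2 : (s, nth 0 b s) \in cells a b by rewrite mem_cells Hs /=; lia.
  exists s, (nth 0 b s); split => //; first lia.
    lia.
  apply: (@ltn_trans (entry a b T (r', nth 0 b s))); first by apply: Hr.
  by apply: Hc.
move=> M.
have : ~~ Q s'.
  apply/negP => /Qmin; lia.
move: Q3; rewrite /Q /nonempty_row => /andP[Hs'1 Hs'2] HnQ.
have Has' : nth 0 a s' <= j'.
  move: HnQ; rewrite Hs'1 Hs'2 /=.
  have -> : r' < s' by lia.
  have -> : s' <= r by lia.
  by rewrite /=; lia.
lia.
Qed.

Lemma sw a b T y x : skew_connected a b -> is_SET a b T ->
  y \in cells a b -> x \in cells a b -> y.1 <= x.1 -> y.2 <= x.2 -> y <> x ->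
  entry a b T y < entry a b T x.
Proof.
move=> Hcon HS; case: y => r' j'; case: x => r j /= Hy Hx H1 H2 Hne.
exact: (sw_aux (k := (r - r').+1) Hcon HS).
Qed.

Lemma cellv_nth a b T p : isperm a b T -> p < nc a b -> cellv a b T (nth 0 T p) = cp a b p.
Proof. by move=> H Hp; rewrite /cellv (index_nthT H). Qed.

Lemma no_ascent_Scol a b T : skew_connected a b -> is_SET a b T ->
  (forall i, 0 < i < nc a b -> (cellv a b T i).1 < (cellv a b T i.+1).1 ->
      (cellv a b T i).2 = (cellv a b T i.+1).2) ->
  T = Scol a b.
Proof.
move=> Hcon HS Hna; have [HP Hr Hc] := HS.
have step : forall v, 0 < v < nc a b -> (cellv a b T v).2 <= (cellv a b T v.+1).2.
  move=> v Hv.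
  have Hv1 : 0 < v <= nc a b by lia.
  have Hv2 : 0 < v.+1 <= nc a b by lia.
  case: (ltnP (cellv a b T v).1 (cellv a b T v.+1).1) => Hrow.
    by rewrite Hna.
  rewrite leqNgt; apply/negP => Hcol.
  have := sw Hcon HS (cellv_in HP Hv2) (cellv_in HP Hv1) Hrow (ltnW Hcol).
  rewrite !(entry_cellv HP) // => H; suff: v.+1 < v by lia.
  by apply: H => E; move: Hcol; rewrite E ltnn.
have mono : forall d v, 0 < v -> v + d <= nc a b ->
    (cellv a b T v).2 <= (cellv a b T (v + d)).2.
  move=> d; elim: d => [|d IHd] v Hv Hvd; first by rewrite addn0.
  apply: leq_trans (IHd v Hv _) _; first lia.
  rewrite addnS; apply: step; lia.
symmetry; apply: rel_eq; [exact: Scol_perm | exact: HP |].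
move=> p q Hp Hq.
rewrite -!(entry_cp _ Hp) -(entry_cp _ Hq) -(entry_cp _ Hq).
rewrite Scol_lt ?cp_in // /lexcr.
case/orP => [Hlt|/andP[/eqP E Hlt]]; last by apply: Hc; rewrite ?cp_in.
rewrite ltnNge; apply/negP => Hle.
case: (eqVneq p q) => [E|Npq]; first by subst; rewrite ltnn in Hlt.
have Hne : entry a b T (cp a b q) != entry a b T (cp a b p).
  rewrite !entry_cp //; apply/eqP => /(nthT_inj HP Hq Hp) E; by rewrite E eqxx in Npq.
have Hlt2 : entry a b T (cp a b q) < entry a b T (cp a b p) by rewrite ltn_neqAle Hne Hle.
have Rq := entry_in HP (cp_in Hq); have Rp := entry_in HP (cp_in Hp).
have := mono (entry a b T (cp a b p) - entry a b T (cp a b q)) (entry a b T (cp a b q)).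
rewrite subnKC ?(ltnW Hlt2) // !entry_cp // !(cellv_nth HP) //.
move: Rq Rp; rewrite !entry_cp // => Rq Rp.
move=> /(_ (proj1 (andP Rq)) (proj2 (andP Rp))) => H'; lia.
Qed.


Lemma D_bound a b T : Dinv a b T <= nc a b * nc a b.
Proof.
apply: (@leq_trans (\sum_(p < nc a b) \sum_(q < nc a b) 1)).
  by apply: leq_sum => p _; apply: leq_sum => q _; case: (_ && _).
by rewrite big_const_ord iter_addn_0 big_const_ord iter_addn_0 mul1n.
Qed.

Lemma set_swap_up a b T i : is_SET a b T -> 0 < i -> i < nc a b ->
  (cellv a b T i).1 < (cellv a b T i.+1).1 ->
  (cellv a b T i).2 <> (cellv a b T i.+1).2 ->
  is_SET a b (swap_vals i T).
Proof.
move=> [H Hr Hc] H1 H2 Hrow Hcol; split; first exact: perm_swap.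
- move=> c0 d0 Hc0 Hd0 E1 E2.
  apply: (swap_pres (R := fun c d => c.1 = d.1 /\ c.2 < d.2) H _ _ _ Hc0 Hd0) => //.
  + by move=> c d Hc' Hd' [F1 F2]; apply: Hr.
  + by move=> [E _]; move: Hrow; rewrite E ltnn.
  + by move=> [E _]; move: Hrow; rewrite E ltnn.
- move=> c0 d0 Hc0 Hd0 E1 E2.
  apply: (swap_pres (R := fun c d => c.2 = d.2 /\ c.1 < d.1) H _ _ _ Hc0 Hd0) => //.
  + by move=> c d Hc' Hd' [F1 F2]; apply: Hc.
  + by move=> [E _].
  + by move=> [E _]; apply: Hcol.
Qed.

Lemma scol_le a b T : skew_connected a b -> is_SET a b T -> hecke_le a b (Scol a b) T.
Proof.
move=> Hcon.
suff: forall k T, nc a b * nc a b - Dinv a b T < k -> is_SET a b T -> hecke_le a b (Scol a b) T.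
  by move=> /(_ (nc a b * nc a b - Dinv a b T).+1 T (ltnSn _)).
elim=> [|k IH] {}T Hk HS; first lia.
have HP : isperm a b T by case: HS.
case Hhas: (has (fun i => ((cellv a b T i).1 < (cellv a b T i.+1).1) &&
                          ((cellv a b T i).2 != (cellv a b T i.+1).2)) (iota 1 (nc a b).-1)).
  move/hasP: Hhas => [i]; rewrite mem_iota => Hi /andP[Hrow /eqP Hcol].
  have Hi1 : 0 < i by lia.
  have Hi2 : i < nc a b by lia.
  set T' := swap_vals i T.
  have HS' : is_SET a b T' by apply: set_swap_up.
  have HP' : isperm a b T' by case: HS'.
  have Hrow' : row_of a b T' i.+1 < row_of a b T' i.
    by rewrite /T' !row_of_swap /fsw eqxx (_ : i.+1 == i = false) ?eqxx //; lia.
  have HD := D_swap HP' Hi1 Hi2 Hrow'.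
  rewrite /T' swapK in HD.
  have := D_bound a b T'; move=> Hb.
  apply: (hecke_le_trans (IH T' _ HS')); first by rewrite /T' in Hb *; lia.
  apply: (@hle_step a b T' T T i Hi1 Hi2 _ (hle_refl _ _ _)).
  rewrite /pi_op.
  have -> : row_of a b T' i < row_of a b T' i.+1 = false by apply/negbTE; rewrite -leqNgt ltnW.
  by rewrite Hrow' /T' swapK.
have -> : T = Scol a b; last exact: hle_refl.
apply: no_ascent_Scol => // i Hi Hrow.
apply/eqP; apply: contraFT Hhas => Hcol.
apply/hasP; exists i; first by rewrite mem_iota; lia.
by rewrite Hrow Hcol.
Qed.


Lemma Dinv_pos a b T p q : p < nc a b -> q < nc a b ->
  (cp a b p).1 < (cp a b q).1 -> nth 0 T q < nth 0 T p -> 0 < Dinv a b T.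
Proof.
move=> Hp Hq H1 H2; rewrite /Dinv (bigD1 (Ordinal Hp)) //= (bigD1 (Ordinal Hq)) //=.
by rewrite H1 H2.
Qed.

Lemma mono_D0 a b T : isperm a b T ->
  (forall i, 0 < i < nc a b -> row_of a b T i <= row_of a b T i.+1) -> Dinv a b T = 0.
Proof.
move=> HP Hm.
have mono : forall d v, 0 < v -> v + d <= nc a b -> row_of a b T v <= row_of a b T (v + d).
  move=> d; elim: d => [|d IHd] v Hv Hvd; first by rewrite addn0.
  apply: leq_trans (IHd v Hv _) _; first lia.
  rewrite addnS; apply: Hm; lia.
apply: big1 => p _; apply: big1 => q _.
apply/eqP; rewrite eqb0; apply/negP => /andP[H1 H2].
have Rq := nthT_range HP (ltn_ord q); have Rp := nthT_range HP (ltn_ord p).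
have := mono (nth 0 T p - nth 0 T q) (nth 0 T q).
rewrite subnKC ?(ltnW H2) // !row_of_cellv !(cellv_nth HP) //.
move=> /(_ (proj1 (andP Rq)) (proj2 (andP Rp))) => H'; lia.
Qed.

Lemma D0_Srow a b T : is_SET a b T -> Dinv a b T = 0 -> T = Srow a b.
Proof.
move=> [HP Hr Hc] HD; symmetry; apply: rel_eq; [exact: Srow_perm|exact: HP|].
move=> p q Hp Hq; rewrite !nth_Srow // ltnS => Hpq.
have := (pairwiseP (0,0) (pairwise_cells a b)) p q Hp Hq Hpq.
rewrite /lexrc; case/orP => [H1|/andP[/eqP E1 H2]].
  rewrite ltnNge leq_eqVlt negb_or; apply/andP; split.
    apply/eqP => /(nthT_inj HP Hq Hp) E; lia.
  by apply/negP => H2; have := Dinv_pos Hp Hq H1 H2; lia.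
by rewrite -(entry_cp T Hp) -(entry_cp T Hq); apply: Hr; rewrite ?cp_in.
Qed.

Lemma le_Srow a b T : is_SET a b T -> hecke_le a b T (Srow a b).
Proof.
suff: forall k T, Dinv a b T < k -> is_SET a b T -> hecke_le a b T (Srow a b).
  by move=> /(_ (Dinv a b T).+1 T (ltnSn _)).
elim=> [|k IH] {}T Hk HS; first lia.
have HP : isperm a b T by case: HS.
case Hhas: (has (fun i => row_of a b T i.+1 < row_of a b T i) (iota 1 (nc a b).-1)).
  move/hasP: Hhas => [i]; rewrite mem_iota => Hi Hrow.
  have Hi1 : 0 < i by lia.
  have Hi2 : i < nc a b by lia.
  have Hpi : pi_op a b i T = Some (swap_vals i T).
    rewrite /pi_op Hrow.
    by have -> : row_of a b T i < row_of a b T i.+1 = false by apply/negbTE; rewrite -leqNgt ltnW.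
  have HS1 := pi_SET HS Hi1 Hi2 Hpi.
  have HD := D_swap HP Hi1 Hi2 Hrow.
  apply: (@hle_step a b T _ _ i Hi1 Hi2 Hpi); apply: IH HS1; lia.
have -> : T = Srow a b; last exact: hle_refl.
apply: D0_Srow => //; apply: mono_D0 => // i Hi.
rewrite leqNgt; apply: contraFN Hhas => H.
by apply/hasP; exists i => //; rewrite mem_iota; lia.
Qed.

Lemma chain_exists a b k T : Dinv a b T = k -> is_SET a b T ->
  exists s, SET_chain a b (T :: s) /\ size s = k.
Proof.
elim: k T => [|k IH] T HD HS.
  exists [::]; split => //; split.
    by case.
  by [].
have HP : isperm a b T by case: HS.
case Hhas: (has (fun i => row_of a b T i.+1 < row_of a b T i) (iota 1 (nc a b).-1)); last first.
  have := mono_D0 HP; rewrite HD; move=> H; suff: k.+1 = 0 by [].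
  apply: H => i Hi; rewrite leqNgt; apply: contraFN Hhas => H.
  by apply/hasP; exists i => //; rewrite mem_iota; lia.
move/hasP: Hhas => [i]; rewrite mem_iota => Hi Hrow.
have Hi1 : 0 < i by lia.
have Hi2 : i < nc a b by lia.
have Hpi : pi_op a b i T = Some (swap_vals i T).
  rewrite /pi_op Hrow.
  by have -> : row_of a b T i < row_of a b T i.+1 = false by apply/negbTE; rewrite -leqNgt ltnW.
have HS1 := pi_SET HS Hi1 Hi2 Hpi.
have HD1 := D_swap HP Hi1 Hi2 Hrow.
have [s [[Hs1 Hs2] Hsz]] := IH (swap_vals i T) ltac:(lia) HS1.
exists (swap_vals i T :: s); split; last by rewrite /= Hsz.
split.
  by case=> [|m] //= Hm; apply: Hs1.
case=> [|m] /= Hm; last by apply: Hs2.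
split; first exact: (@hle_step a b T _ _ i Hi1 Hi2 Hpi (hle_refl _ _ _)).
by move=> E; rewrite -E in HD1; lia.
Qed.

Lemma chain_bound a b s T : SET_chain a b (T :: s) -> size s <= Dinv a b T.
Proof.
elim: s T => [|T1 s IH] T [Hs1 Hs2] //=.
have HT : is_SET a b T by apply: (Hs1 0).
have [Hle Hne] := Hs2 0 isT.
have [HPT _ _] := HT.
have [_ H1 H2] := hle_D Hle HPT.
have HD : Dinv a b T1 < Dinv a b T.
  rewrite ltn_neqAle H1 andbT; apply/eqP => E; apply: Hne; symmetry; exact: H2.
have : size s <= Dinv a b T1.
  apply: IH; split.
    by move=> m Hm; apply: (Hs1 m.+1).
  by move=> m Hm; apply: (Hs2 m.+1).
lia.
Qed.


Lemma sum_neq n (p : 'I_n) : \sum_(q < n) ((p != q) : nat) = n.-1.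
Proof.
have H1 : \sum_(q < n) (((p != q) : nat) + (p == q)) = n.
  rewrite (eq_bigr (fun _ => 1)); last by move=> q _; case: eqP.
  by rewrite big_const_ord iter_addn_0 mul1n.
have H2 : \sum_(q < n) ((p == q) : nat) = 1.
  rewrite (bigD1 p) //= eqxx big1 // => q; rewrite eq_sym => /negbTE ->.
  by [].
move: H1; rewrite big_split /= H2; lia.
Qed.

Lemma count_identity a b :
  Dinv a b (Scol a b) + \sum_(c <- cells a b) ls a b c = 'C(nc a b, 2).
Proof.
set n := nc a b.
pose I (p q : 'I_n) := (((cp a b p).1 < (cp a b q).1) && ((cp a b q).2 < (cp a b p).2) : nat).
pose L (p q : 'I_n) := ((cp a b q != cp a b p) && ((cp a b q).1 <= (cp a b p).1)
    && ((cp a b q).2 <= (cp a b p).2) : nat).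
have ED : Dinv a b (Scol a b) = \sum_(p < n) \sum_(q < n) I p q.
  apply: eq_bigr => p _; apply: eq_bigr => q _.
  rewrite -(entry_cp _ (ltn_ord p)) -(entry_cp _ (ltn_ord q)) Scol_lt ?cp_in //.
  rewrite /I /lexcr; case: ltngtP => //= H1.
  by case: (ltngtP (cp a b q).2 (cp a b p).2) => //=; rewrite andbF.
have EL : \sum_(c <- cells a b) ls a b c = \sum_(p < n) \sum_(q < n) L p q.
  rewrite (big_nth (0,0)) big_mkord; apply: eq_bigr => p _.
  rewrite /ls -sum1_count (big_nth (0,0)) big_mkord big_mkcond /=.
  by apply: eq_bigr => q _; rewrite /L -/(cp a b q) -/(cp a b p); case: (_ && _).
have Epw : forall p q : 'I_n, I p q + I q p + L p q + L q p = (p != q).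
  move=> p q; rewrite /I /L.
  case: (eqVneq p q) => [->|Npq].
    by rewrite eqxx ltnn.
  have Nc : cp a b p != cp a b q.
    by apply/eqP => /(cp_inj (ltn_ord p) (ltn_ord q)) /val_inj E; rewrite E eqxx in Npq.
  rewrite !(eq_sym (cp a b q)) (negbTE Nc) /=.
  move: Nc; case: (cp a b p) => r1 c1; case: (cp a b q) => r2 c2 /=.
  rewrite xpair_eqE.
  by case: (ltngtP r1 r2); case: (ltngtP c1 c2).
have Esum : \sum_(p < n) \sum_(q < n) (I p q + I q p + L p q + L q p) = n * n.-1.
  rewrite (eq_bigr (fun p : 'I_n => n.-1)); last first.
    move=> p _; rewrite -(sum_neq p); apply: eq_bigr => q _; exact: Epw.
  by rewrite big_const_ord iter_addn_0 mulnC.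
move: Esum.
rewrite (eq_bigr (fun p : 'I_n => \sum_(q < n) I p q + \sum_(q < n) I q p
   + \sum_(q < n) L p q + \sum_(q < n) L q p)); last first.
  by move=> p _; rewrite !big_split.
rewrite !big_split /= [\sum_(p < n) \sum_(q < n) I q p]exchange_big.
rewrite [\sum_(p < n) \sum_(q < n) L q p]exchange_big /= -ED -EL => E.
rewrite bin2 -E; lia.
Qed.


Theorem theorem4p1 (a b : seq nat) :
  is_comp a -> is_comp b -> comp_sub b a -> skew_connected a b ->
  [/\ is_minimal (is_SET a b) (hecke_le a b) (Scol a b),
      (forall T, is_minimal (is_SET a b) (hecke_le a b) T -> T = Scol a b),
      (forall T, is_SET a b T <->
         [/\ is_SIT a b T, hecke_le a b (Scol a b) T & hecke_le a b T (Srow a b)])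
    & (exists r, SET_rank a b r /\
         r + \sum_(c <- cells a b) ls a b c = 'C(size (cells a b), 2))].
Proof.
move=> _ _ _ Hcon.
have HS := Scol_SET a b.
split.
- split => // T' HT' Hle.
  have Hge := scol_le Hcon HT'.
  have [HPT _ _] := HT'.
  have [_ H1 _] := hle_D Hle HPT.
  have [_ H2 H3] := hle_D Hge (Scol_perm a b).
  apply: H3; lia.
- move=> T [HT Hmin]; symmetry; apply: Hmin => //; exact: scol_le.
- move=> T; split.
    move=> HT; split; [|exact: scol_le|exact: le_Srow].
    case: HT => H1 H2 H3; split => // c d Hc Hd E1 E2; apply: H3 => //; by rewrite E1 E2.
  by case=> _ H _; apply: hecke_le_SET H HS.
- exists (Dinv a b (Scol a b)); split; last exact: count_identity.
  split.
    have [s [Hs Hsz]] := chain_exists (erefl _) HS.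
    by exists (Scol a b :: s); rewrite /= Hsz.
  case=> [//|T s] Hs /=.
  have HT : is_SET a b T by case: Hs => H _; apply: (H 0).
  have := chain_bound Hs.
  have [HPT _ _] := HT.
  have [_ H2 _] := hle_D (scol_le Hcon HT) (Scol_perm a b).
  lia.
Qed.
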